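(* Let $X$ and $Y$ be slices that are jointly spacelike (i.e. $X\cup Y$ is spacelike) and satisfy $X\cap Y=\varnothing$. Then the product and the coproduct of $X$ and $Y$ exist in $\mathsf{Slice}$, and both are given by the set-theoretic union $X\cup Y$.
   Context: Fix a connected, time-orientable Lorentzian manifold $\mathcal{M}$ with a fixed time-orientation (no further causality assumptions; closed timelike curves may exist). A causal curve is an equivalence class, up to monotone reparametrisation, of smooth regular paths $\mu:\iota\to\mathcal{M}$ ($\iota\subseteq\mathbb{R}$ an interval) whose tangent is everywhere timelike or null; it is future-directed if the tangent is everywhere future-directed. Write $x\prec y$ if $x=y$ or there is a future-directed causal curve from $x$ to $y$. A region $A\subseteq\mathcal{M}$ is spacelike if no two distinct points $x,y\in A$ satisfy $x\prec y$. A slice is a closed spacelike subset of $\mathcal{M}$; slices $X,Y$ are jointly spacelike if $X\cup Y$ is spacelike. For regions $A,B$, $\mathcal{C}[A,B]$ is the set of future-directed causal curves passing through $A$ and then $B$: for a representative path $\mu:\iota\to\mathcal{M}$, there exists $q\in\iota$ with $\mu(q)\in B$, and for every such $q$ there exists $p\le q$ with $\mu(p)\in A$. Write $\mathcal{C}[A]:=\mathcal{C}[A,A]$. The category $\mathsf{Slice}$ has slices as objects, $\mathsf{Slice}(X,Y)=\mathcal{P}(\mathcal{C}[X,Y])$ (the powerset), composition $T\circ S:=T\cap S$, and identities $1_X=\mathcal{C}[X,X]$. *)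

(* Defs.v *)
From HB Require Import structures.
From mathcomp Require Import all_boot all_order all_algebra.
From mathcomp Require Import all_classical all_reals.
From mathcomp Require Import topology normedtype derive.
Set Implicit Arguments. Unset Strict Implicit. Unset Printing Implicit Defensive.
Import Order.TTheory GRing.Theory Num.Theory.
Import numFieldNormedType.Exports.
Local Open Scope classical_set_scope.
Local Open Scope ring_scope.

Section Smooth.
Variables (R : realType) (V W : normedModType R).

Fixpoint iterD (vs : seq V) (f : V -> W) : V -> W :=
  if vs is v :: vs' then fun x => 'D_v (iterD vs' f) x else f.

Definition smooth_on (U : set V) (f : V -> W) : Prop :=
  forall vs : seq V,
    (forall x, U x -> {for x, continuous (iterD vs f)}) /\
    (forall v x, U x -> derivable (iterD vs f) x v).
End Smooth.

Record chart (R : realType) (M : Type) (d : nat) := Chart {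
  cdom : set M;
  cmap : M -> 'rV[R]_d;
  cinv : 'rV[R]_d -> M
}.

Section Spacetime.
Variables (R : realType) (M : topologicalType) (n : nat).
Notation d := n.+1.
Notation E := 'rV[R]_d.

Definition cimg (c : chart R M d) : set E := cmap c @` cdom c.

Definition is_chart (c : chart R M d) : Prop :=
  [/\ open (cdom c), open (cimg c),
      (forall x, cdom c x -> cinv c (cmap c x) = x),
      (forall y, cimg c y -> (cdom c (cinv c y) /\ cmap c (cinv c y) = y)) &
      {within cdom c, continuous (cmap c)} /\
      {within cimg c, continuous (cinv c)}].

Definition trans (c c' : chart R M d) : E -> E := cmap c' \o cinv c.
Definition overlap (c c' : chart R M d) : set E := cmap c @` (cdom c `&` cdom c').

(* Jacobian (row-vector convention: the differential is v |-> v *m J) *)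
Definition jacobian (f : E -> E) (x : E) : 'M[R]_d :=
  \matrix_(i < d, j < d) ('D_(delta_mx 0 i : E) f x) 0 j.

Definition bil (G : 'M[R]_d) (u v : E) : R := (u *m G *m v^T) 0 0.

Definition minkowski : 'M[R]_d :=
  diag_mx (\row_(i < d) (if i == ord0 then -1 else 1)).

(* A time-oriented Lorentzian manifold of dimension n+1:
   - M a connected, Hausdorff, second countable space,
   - a smooth atlas,
   - the metric given by its components in each chart (smooth, symmetric,
     of Lorentzian signature), transforming as a (0,2)-tensor,
   - a continuous timelike vector field (the fixed time-orientation),
     given by its components in each chart, transforming as a vector. *)
Record spacetime := Spacetime {
  atlas : set (chart R M d);
  metric : chart R M d -> E -> 'M[R]_d;
  timef : chart R M d -> E -> E
}.

Definition is_spacetime (S : spacetime) : Prop :=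
  [/\ [/\ hausdorff_space M, second_countable (T := M) & connected [set: M]],
    (forall c, atlas S c -> is_chart c),
    (forall x : M, exists2 c, atlas S c & cdom c x) /\
    (forall c c', atlas S c -> atlas S c' -> smooth_on (overlap c c') (trans c c')),
    (forall c, atlas S c ->
       smooth_on (cimg c) (metric S c) /\
       forall y, cimg c y ->
         (metric S c y)^T = metric S c y /\
         exists2 P : 'M[R]_d, P \in unitmx & P^T *m metric S c y *m P = minkowski) &
    (forall c c' y, atlas S c -> atlas S c' -> overlap c c' y ->
       metric S c y =
         jacobian (trans c c') y *m metric S c' (trans c c' y) *m (jacobian (trans c c') y)^T) /\
    (forall c, atlas S c ->
       {within cimg c, continuous (timef S c)} /\
       (forall y, cimg c y -> bil (metric S c y) (timef S c y) (timef S c y) < 0) /\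
       (forall c' y, atlas S c' -> overlap c c' y ->
          timef S c' (trans c c' y) = timef S c y *m jacobian (trans c c') y))].

(* only the values on [pdom] matter for the curve, smoothness on the   *)
(* interval (including endpoints) is expressed as smoothness on an     *)
(* open neighbourhood of it.                                           *)
Record path := Path { pdom : set R; pmap : R -> M }.

Variable S : spacetime.

Definition tangent (c : chart R M d) (p : path) (t : R) : E :=
  'D_1 (cmap c \o pmap p) t.

Definition fd_causal_path (p : path) : Prop :=
  is_interval (pdom p) /\
  (exists O : set R, [/\ open O, pdom p `<=` O &
     forall t c, O t -> atlas S c -> cdom c (pmap p t) ->
       exists2 e : R, 0 < e &
         (forall s, ball t e s -> cdom c (pmap p s)) /\
         smooth_on (ball t e) (cmap c \o pmap p)]) /\
  (forall t c, pdom p t -> atlas S c -> cdom c (pmap p t) ->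
     let y := cmap c (pmap p t) in
     let v := tangent c p t in
     [/\ v != 0,
         bil (metric S c y) v v <= 0 &
         bil (metric S c y) v (timef S c y) < 0]).

(* equality of causal curves: monotone (increasing, smooth, with positive
   derivative) reparametrisation *)
Definition reparam (p q : path) : Prop :=
  exists phi : R -> R,
   [/\ (exists2 O : set R, open O /\ pdom q `<=` O & smooth_on O phi),
       (forall s, pdom q s -> pdom p (phi s) /\ 0 < 'D_1 phi s),
       (forall t, pdom p t -> exists2 s, pdom q s & phi s = t),
       (forall s1 s2, pdom q s1 -> pdom q s2 -> s1 < s2 -> phi s1 < phi s2) &
       (forall s, pdom q s -> pmap q s = pmap p (phi s))].

Definition curve_eq (p q : path) : Prop :=
  fd_causal_path p /\ fd_causal_path q /\ (reparam p q \/ reparam q p).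

(* a set of paths representing a set of causal curves *)
Definition saturated (A : set path) : Prop :=
  forall p q, curve_eq p q -> A p -> A q.

Definition causal_le (x y : M) : Prop :=
  x = y \/ exists p a b, [/\ fd_causal_path p, pdom p a, pdom p b, a <= b &
                             pmap p a = x /\ pmap p b = y].

Definition spacelike (A : set M) : Prop :=
  forall x y, A x -> A y -> x <> y -> ~ causal_le x y.

Definition slice (A : set M) : Prop := closed A /\ spacelike A.

Definition Ccurves (A B : set M) : set path :=
  [set p | [/\ fd_causal_path p,
     (exists2 q, pdom p q & B (pmap p q)) &
     (forall q, pdom p q -> B (pmap p q) ->
        exists2 r, pdom p r & r <= q /\ A (pmap p r))]].

(* the category Slice: Hom(X,Y) = subsets of C[X,Y] (saturated sets of
   representative paths = sets of curves); composition T o S := T `&` S;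
   identity 1_X := C[X,X]. *)
Definition Hom (X Y : set M) (F : set path) : Prop :=
  F `<=` Ccurves X Y /\ saturated F.

Definition comp (T F : set path) : set path := T `&` F.

Definition is_product (X Y P : set M) : Prop :=
  slice P /\
  exists piX piY, [/\ Hom P X piX, Hom P Y piY &
    forall Z f g, slice Z -> Hom Z X f -> Hom Z Y g ->
      exists! h, Hom Z P h /\ comp piX h = f /\ comp piY h = g].

Definition is_coproduct (X Y P : set M) : Prop :=
  slice P /\
  exists iX iY, [/\ Hom X P iX, Hom Y P iY &
    forall Z f g, slice Z -> Hom X Z f -> Hom Y Z g ->
      exists! h, Hom P Z h /\ comp h iX = f /\ comp h iY = g].

End Spacetime.

(* Main.v *)
Require Import Defs.
From HB Require Import structures.
From mathcomp Require Import all_boot all_order all_algebra.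
From mathcomp Require Import all_classical all_reals.
From mathcomp Require Import topology normedtype derive.
Import Order.TTheory GRing.Theory Num.Theory.
Set Implicit Arguments. Unset Strict Implicit. Unset Printing Implicit Defensive.
Local Open Scope classical_set_scope.

Definition Hh (R : realType) (M : topologicalType) (n : nat)
  (S : spacetime R M n) (B : set M) : set (Defs.path R M) :=
  [set p | fd_causal_path S p /\ exists2 q, Defs.pdom p q & B (Defs.pmap p q)].

Lemma same_pt (R : realType) (M : topologicalType) (n : nat)
  (S : spacetime R M n) (P : set M) p a b :
  spacelike S P -> fd_causal_path S p -> Defs.pdom p a -> Defs.pdom p b ->
  P (Defs.pmap p a) -> P (Defs.pmap p b) -> Defs.pmap p a = Defs.pmap p b.
Proof.
move=> sp fp da db Pa Pb.
case: (pselect (Defs.pmap p a = Defs.pmap p b)) => // neq; exfalso.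
case/orP: (le_total a b) => ab.
- by apply: (sp _ _ Pa Pb neq); right; exists p, a, b; split.
- by apply: (sp _ _ Pb Pa (nesym neq)); right; exists p, b, a; split.
Qed.

Lemma CH1 (R : realType) (M : topologicalType) (n : nat)
  (S : spacetime R M n) (A B : set M) :
  B `<=` A -> Ccurves S A B = Hh S B.
Proof.
move=> BA; apply/seteqP; split => p.
- by case=> fp hit _; split.
- case=> fp [q dq Bq]; split => //; first by exists q.
  move=> r dr Br; exists r => //; split; [exact: lexx | exact: BA].
Qed.

Lemma CH2 (R : realType) (M : topologicalType) (n : nat)
  (S : spacetime R M n) (X Y : set M) :
  spacelike S (X `|` Y) -> Ccurves S X (X `|` Y) = Hh S X.
Proof.
move=> sp; apply/seteqP; split => p.
- case=> fp [q dq Pq] hr; split => //.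
  by have [r dr [_ Xr]] := hr q dq Pq; exists r.
- case=> fp [q dq Xq]; split => //; first by exists q => //; left.
  move=> r dr Pr; exists r => //; split => //.
  have e := same_pt sp fp dq dr (or_introl Xq) Pr.
  by rewrite -e.
Qed.

Lemma disj (R : realType) (M : topologicalType) (n : nat)
  (S : spacetime R M n) (X Y : set M) p :
  X `&` Y = set0 -> spacelike S (X `|` Y) -> Hh S X p -> Hh S Y p -> False.
Proof.
move=> XY0 sp [fp [a da Xa]] [_ [b db Yb]].
have e := same_pt sp fp da db (or_introl Xa) (or_intror Yb).
have Xb : X (Defs.pmap p b) by rewrite -e.
have : (X `&` Y) (Defs.pmap p b) := conj Xb Yb.
by rewrite XY0.
Qed.

Lemma Sat (R : realType) (M : topologicalType) (n : nat)
  (S : spacetime R M n) (A : set M) : saturated S (Hh S A).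
Proof.
move=> p q [fp [fq rp]] [_ [t dt At]]; split => //.
case: rp => [[phi [_ h1 h2 _ h3]] | [phi [_ h1 h2 _ h3]]].
- have [s ds e] := h2 t dt; exists s => //; by rewrite h3 // e.
- exists (phi t); [exact: (h1 t dt).1 | by rewrite -h3].
Qed.

Lemma CA (R : realType) (M : topologicalType) (n : nat)
  (S : spacetime R M n) (A B : set M) p : Ccurves S A B p -> Hh S A p.
Proof.
case=> fc [q dq Bq] hr; have [r dr [_ Ar]] := hr q dq Bq; split => //.
by exists r.
Qed.

Lemma CB (R : realType) (M : topologicalType) (n : nat)
  (S : spacetime R M n) (A B : set M) p : Ccurves S A B p -> Hh S B p.
Proof. by case=> fc hit _; split. Qed.

Theorem mainTheorem2 (R : realType) (M : topologicalType) (n : nat)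
  (S : spacetime R M n) (HS : is_spacetime S) (X Y : set M) :
  slice S X -> slice S Y -> spacelike S (X `|` Y) -> X `&` Y = set0 ->
  is_product S X Y (X `|` Y) /\ is_coproduct S X Y (X `|` Y).
Proof.
move=> [cX sX] [cY sY] sp XY0.
have sl : slice S (X `|` Y) by split => //; exact: closedU.
have sp' : spacelike S (Y `|` X) by rewrite setUC.
have YX0 : Y `&` X = set0 by rewrite setIC.
split; split => //.
- have HX : Ccurves S (X `|` Y) X = Hh S X by apply: CH1; exact: subsetUl.
  have HY : Ccurves S (X `|` Y) Y = Hh S Y by apply: CH1; exact: subsetUr.
  exists (Hh S X), (Hh S Y); split.
  + by split; [rewrite HX | exact: Sat].
  + by split; [rewrite HY | exact: Sat].
  move=> Z f g sZ [fs fsat] [gs gsat]; exists (f `|` g); split.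
  + split; [split|split].
    * move=> p [fp|gp].
      - have [fc [q dq Xq] hr] := fs p fp.
        split => //; first by exists q => //; left.
        move=> r dr [Xr|Yr]; first exact: hr.
        exfalso; apply: (disj XY0 sp (p := p)); split => //.
        by exists q. by exists r.
      - have [fc [q dq Yq] hr] := gs p gp.
        split => //; first by exists q => //; right.
        move=> r dr [Xr|Yr]; last exact: hr.
        exfalso; apply: (disj XY0 sp (p := p)); split => //.
        by exists r. by exists q.
    * by move=> p q e [fp|gp]; [left; exact: fsat e fp | right; exact: gsat e gp].
    * apply/seteqP; split => p.
      - case=> hx [fp|gp] //; exfalso; exact: (disj XY0 sp hx (CB (gs p gp))).
      - by move=> fp; split; [exact: (CB (fs p fp)) | left].
    * apply/seteqP; split => p.
      - case=> hy [fp|gp] //; exfalso; exact: (disj XY0 sp (CB (fs p fp)) hy).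
      - by move=> gp; split; [exact: (CB (gs p gp)) | right].
  + move=> h [[hs hsat] [e1 e2]]; rewrite -e1 -e2 /comp.
    apply/seteqP; split => p.
    * by case=> -[_ hp].
    * move=> hp; have [fc [q dq [Xq|Yq]] _] := hs p hp; [left|right];
        (split => //; split => //); by exists q.
- have HX : Ccurves S X (X `|` Y) = Hh S X by apply: CH2.
  have HY : Ccurves S Y (X `|` Y) = Hh S Y by rewrite setUC; apply: CH2.
  exists (Hh S X), (Hh S Y); split.
  + by split; [rewrite HX | exact: Sat].
  + by split; [rewrite HY | exact: Sat].
  move=> Z f g sZ [fs fsat] [gs gsat]; exists (f `|` g); split.
  + split; [split|split].
    * move=> p [fp|gp].
      - have [fc hz hr] := fs p fp; split => //.
        move=> q dq Zq; have [r dr [rq Xr]] := hr q dq Zq.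
        by exists r => //; split => //; left.
      - have [fc hz hr] := gs p gp; split => //.
        move=> q dq Zq; have [r dr [rq Yr]] := hr q dq Zq.
        by exists r => //; split => //; right.
    * by move=> p q e [fp|gp]; [left; exact: fsat e fp | right; exact: gsat e gp].
    * apply/seteqP; split => p.
      - case=> -[fp|gp] hx //; exfalso; exact: (disj XY0 sp hx (CA (gs p gp))).
      - by move=> fp; split; [left | exact: (CA (fs p fp))].
    * apply/seteqP; split => p.
      - case=> -[fp|gp] hy //; exfalso; exact: (disj XY0 sp (CA (fs p fp)) hy).
      - by move=> gp; split; [right | exact: (CA (gs p gp))].
  + move=> h [[hs hsat] [e1 e2]]; rewrite -e1 -e2 /comp.
    apply/seteqP; split => p.
    * by case=> -[hp _].
    * move=> hp; have [fc [q dq [Xq|Yq]]] := CA (hs p hp); [left|right];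
        (split => //; split => //); by exists q.
Qed.
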